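(* Let $S$ be a $\tau$-mutation system over $\mathcal{A}=\{a_0,\dots,a_{d-1}\}$ with starting word $w$ of length $m$, and let $n\in\mathbb{N}$. Let $\mathbf{M}$ be the $d\times d$ substitution matrix $\mathbf{M}_{i,j}=\mathbb{E}[\mathrm{ct}_{\vartheta(a_j)}(a_i)]$. Then the expected vector of symbol frequencies in $S(n)$ satisfies \[\mathbb{E}\big[\mathbf{fr}^{(1)}_{S(n)}\big]=\frac{\mathbb{E}\big[\mathbf{ct}^{(1)}_{S(n)}\big]}{m+n(\tau-1)}=\frac{1}{m+n(\tau-1)}\prod_{j=0}^{n-1}\frac{1}{m+j(\tau-1)}\Big(\mathbf{M}+(m+j(\tau-1)-1)\mathbf{I}\Big)\cdot\mathbf{ct}^{(1)}_w .\]
   Context: Let $\mathcal{A}=\{a_0,\dots,a_{d-1}\}$ be a finite alphabet and $\mathcal{A}^\star$ the set of finite nonempty words over $\mathcal{A}$. A mutation law $(\vartheta,\mathbb{P})$ assigns to each $a_t$ a finitely supported probability distribution $\mathbb{P}_{a_t}$ on $\mathcal{A}^\star$; $\vartheta(a_t)$ denotes a random word with law $\mathbb{P}_{a_t}$. It is a $\tau$-mutation law ($\tau\in\mathbb{N}$) if each $\mathbb{P}_{a_t}$ is supported on $\mathcal{A}^\tau$, and an average $\tau$-mutation law if $\mathbb{E}|\vartheta(a_t)|=\tau$ for all $t$. A mutation step applied to $w=w_0\cdots w_{m-1}$ chooses $i\in\{0,\dots,m-1\}$ uniformly at random and replaces $w_i$ by an independent random word with law $\mathbb{P}_{w_i}$,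 giving $\vartheta(w)=w_0\cdots w_{i-1}\vartheta(w_i)w_{i+1}\cdots w_{m-1}$. A mutation system with starting word $w$ is $S(0)=w$, $S(n)=\vartheta(S(n-1))$ with fresh independent randomness at each step; it is a ($\text{average}$) $\tau$-mutation system if its law is. For words $u,v$ with $|u|\le|v|$, $\mathrm{ct}_v(u)$ is the number of $i\in\{0,\dots,|v|-1\}$ with $v_iv_{i+1}\cdots v_{i+|u|-1}=u$, indices taken cyclically modulo $|v|$. For $k\in\mathbb{N}$, $\mathbf{ct}^{(k)}_v\in\mathbb{R}^{d^k}$ is the vector $(\mathrm{ct}_v(u))_{u\in\mathcal{A}^k}$ (coordinates in lexicographic order) and $\mathbf{fr}^{(k)}_v=\mathbf{ct}^{(k)}_v/|v|$. The matrices in the product commute, so the order of the product is immaterial. *)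

(* Defs.v *)
From HB Require Import structures.
From mathcomp Require Import all_boot all_order all_algebra.
Set Implicit Arguments. Unset Strict Implicit. Unset Printing Implicit Defensive.
Import Order.TTheory GRing.Theory Num.Theory.
Local Open Scope ring_scope.

(* Alphabet A = {a_0,...,a_{d-1}} is 'I_d; words are seq 'I_d. *)

(* A mutation law: for each letter t, a finitely supported distribution on
   words, given as a finite list of (word, probability) pairs. *)
Definition mlaw (R : Type) (d : nat) := 'I_d -> seq (seq 'I_d * R).

Definition is_mutation_law (R : realFieldType) (d : nat) (L : mlaw R d) : Prop :=
  forall t : 'I_d,
    (forall x, x \in L t -> 0 <= x.2 /\ (0 < size x.1)%N) /\
    \sum_(x <- L t) x.2 = 1.

Definition is_tau_mutation_law (R : realFieldType) (d : nat) (tau : nat)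
    (L : mlaw R d) : Prop :=
  is_mutation_law L /\ forall t x, x \in L t -> size x.1 = tau.

Definition Elaw (R : realFieldType) (d : nat) (V : lmodType R) (L : mlaw R d)
    (t : 'I_d) (g : seq 'I_d -> V) : V :=
  \sum_(x <- L t) x.2 *: g x.1.

(* One mutation step, as its transition operator on observables:
   (mstep L f) v = E[ f (theta(v)) ], with i uniform in {0,..,|v|-1}. *)
Definition mstep (R : realFieldType) (d : nat) (V : lmodType R) (L : mlaw R d)
    (f : seq 'I_d -> V) (v : seq 'I_d) : V :=
  \sum_(i < size v)
     (size v)%:R^-1 *: Elaw L (tnth (in_tuple v) i)
        (fun u => f (take i v ++ u ++ drop i.+1 v)).

(* Expectation E[ f (S(n)) ] for the mutation system with starting word w:
   S is the Markov chain with transition operator mstep, so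
   E[f(S(n))] = (mstep^n f)(w). *)
Fixpoint Esys (R : realFieldType) (d : nat) (V : lmodType R) (L : mlaw R d)
    (n : nat) (f : seq 'I_d -> V) (w : seq 'I_d) : V :=
  match n with
  | 0 => f w
  | n'.+1 => Esys L n' (mstep L f) w
  end.

(* Cyclic occurrence count ct_v(u) (for |u| <= |v|). *)
Definition ct (d : nat) (v u : seq 'I_d) : nat :=
  count (fun i => take (size u) (drop i (v ++ v)) == u) (iota 0 (size v)).

Definition ct1 (R : realFieldType) (d : nat) (v : seq 'I_d) : 'cV[R]_d :=
  \col_(i < d) (ct v [:: i])%:R.

Definition fr1 (R : realFieldType) (d : nat) (v : seq 'I_d) : 'cV[R]_d :=
  (size v)%:R^-1 *: ct1 R v.

Definition subst_mx (R : realFieldType) (d : nat) (L : mlaw R d) : 'M[R]_d :=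
  \matrix_(i < d, j < d) Elaw L j (fun u => (ct u [:: i])%:R : R^o).

(* Main.v *)
Require Import Defs.
From HB Require Import structures.
From mathcomp Require Import all_boot all_order all_algebra.
From mathcomp Require Import zify.
Import Order.TTheory GRing.Theory Num.Theory.
Local Open Scope ring_scope.

Lemma ctE (d : nat) (v : seq 'I_d) (a : 'I_d) : ct v [:: a] = count_mem a v.
Proof.
case: v => [|x0 v']; first by [].
set v := x0 :: v'.
rewrite /ct.
rewrite -(eq_in_count (a1:=fun k => nth x0 v k == a)); last first.
  move=> k; rewrite mem_iota add0n => /andP[_ hk].
  rewrite drop_cat hk (drop_nth x0 hk) /=.
  by rewrite take0 eqseq_cons andbT.
by rewrite -(count_map (nth x0 v) (pred1 a)) -/(mkseq _ _) mkseq_nth.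
Qed.

Lemma Esys_ext (R : realFieldType) (d : nat) (V : lmodType R) (L : mlaw R d) n
  (f g : seq 'I_d -> V) w : f =1 g -> Esys L n f w = Esys L n g w.
Proof.
elim: n f g => [|n IH] f g H /=; first exact: H.
apply: IH => v; rewrite /mstep; apply: eq_bigr => i _; congr (_ *: _).
by rewrite /Elaw; apply: eq_bigr => x _; rewrite H.
Qed.

Lemma Esys_lin (R : realFieldType) (d : nat) (V W : lmodType R) (L : mlaw R d) n
  (phi : {linear V -> W}) (f : seq 'I_d -> V) w :
  Esys L n (fun v => phi (f v)) w = phi (Esys L n f w).
Proof.
elim: n f => [|n IH] f //=.
rewrite -IH; apply: Esys_ext => v.
rewrite /mstep [RHS]linear_sum; apply: eq_bigr => i _.
rewrite /Elaw [RHS]linearZ /=; congr (_ *: _); rewrite [RHS]linear_sum; apply: eq_bigr => x _.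
by rewrite linearZ.
Qed.

Lemma Esys_size (R : realFieldType) (d tau : nat) (V : lmodType R) (L : mlaw R d) n
  (f g : seq 'I_d -> V) w :
  (forall t x, x \in L t -> size x.1 = tau) -> (0 < tau)%N ->
  (forall v, size v = (size w + n * (tau - 1))%N -> f v = g v) ->
  Esys L n f w = Esys L n g w.
Proof.
move=> Hs Ht; elim: n f g => [|n IH] f g H /=; first by apply: H; rewrite mul0n addn0.
apply: IH => v Hv; rewrite /mstep; apply: eq_bigr => i _; congr (_ *: _).
rewrite /Elaw; apply: eq_big_seq => x xin; congr (_ *: _); apply: H.
have hi := ltn_ord i.
rewrite !size_cat size_takel ?(ltnW hi) // size_drop (Hs _ _ xin).
rewrite mulSn. lia.
Qed.

Lemma ct1_cat (R : realFieldType) (d : nat) (a b : seq 'I_d) :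
  ct1 R (a ++ b) = ct1 R a + ct1 R b.
Proof. by apply/matrixP => r c; rewrite !mxE !ctE count_cat natrD. Qed.

Lemma ct1_sum (R : realFieldType) (d : nat) (v : seq 'I_d) :
  ct1 R v = \sum_(x <- v) ct1 R [:: x].
Proof.
elim: v => [|x v IH]; first by apply/matrixP => r c; rewrite big_nil !mxE.
by rewrite big_cons -IH -ct1_cat.
Qed.

Lemma Elaw_ct1 (R : realFieldType) (d : nat) (L : mlaw R d) t :
  Elaw L t (@ct1 R d) = subst_mx L *m ct1 R [:: t].
Proof.
apply/matrixP => r c; rewrite /Elaw summxE mxE.
rewrite [RHS](bigD1 t) //= [X in _ + X]big1 => [|j jt]; last first.
  by rewrite !mxE ctE /= eq_sym (negbTE jt) mulr0.
rewrite !mxE ctE /= eqxx mulr1 addr0.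
by apply: eq_bigr => x _; rewrite !mxE.
Qed.

Lemma mstep_ct1 (R : realFieldType) (d : nat) (L : mlaw R d) (v : seq 'I_d) :
  is_mutation_law L -> (0 < size v)%N ->
  mstep L (@ct1 R d) v =
  ((size v)%:R^-1 *: (subst_mx L + ((size v)%:R - 1)%:M)) *m ct1 R v.
Proof.
move=> HL Hv.
set s := size v.
have step : forall i : 'I_s,
  Elaw L (tnth (in_tuple v) i) (fun u => ct1 R (take i v ++ u ++ drop i.+1 v))
  = ct1 R v - ct1 R [:: tnth (in_tuple v) i] + subst_mx L *m ct1 R [:: tnth (in_tuple v) i].
  move=> i.
  have hi : (i < size v)%N := ltn_ord i.
  have hv : ct1 R v = ct1 R (take i v) + ct1 R [:: tnth (in_tuple v) i] + ct1 R (drop i.+1 v).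
    rewrite -{1}(cat_take_drop i v) (drop_nth (tnth (in_tuple v) i) hi).
    have ht : nth (tnth (in_tuple v) i) v i = tnth (in_tuple v) i.
      by rewrite [RHS](tnth_nth (tnth (in_tuple v) i)).
    by rewrite ht -cat1s !ct1_cat addrA.
  rewrite -Elaw_ct1 /Elaw.
  have -> : ct1 R v - ct1 R [:: tnth (in_tuple v) i] =
     \sum_(x <- L (tnth (in_tuple v) i)) x.2 *: (ct1 R v - ct1 R [:: tnth (in_tuple v) i]).
    by rewrite -scaler_suml (proj2 (HL _)) scale1r.
  rewrite -big_split /=; apply: eq_bigr => x _.
  rewrite -scalerDr; congr (_ *: _).
  by rewrite !ct1_cat hv [X in X - _]addrAC addrK addrAC -addrA.
rewrite /mstep.
under eq_bigr do rewrite step.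
rewrite -scaler_sumr !big_split /= sumrN sumr_const card_ord -mulmx_sumr.
rewrite -(big_tnth _ _ _ xpredT (fun x => ct1 R [:: x])) -ct1_sum.
rewrite -scalemxAl mulmxDl mul_scalar_mx -scaler_nat scalerBl scale1r.
by rewrite addrC.
Qed.

Lemma Amx_comm (R : realFieldType) (d : nat) (M B : 'M[R]_d) (s : R) :
  B *m M = M *m B ->
  (s^-1 *: (M + (s - 1)%:M)) *m B = B *m (s^-1 *: (M + (s - 1)%:M)).
Proof.
move=> H; rewrite -scalemxAl -scalemxAr mulmxDl mulmxDr H; congr (_ *: (_ + _)).
by rewrite mul_scalar_mx mul_mx_scalar.
Qed.

Lemma bigmx_rcons (R : realFieldType) (d : nat) (s : seq nat) (x : nat)
  (F : nat -> 'M[R]_d) :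
  \big[mulmx/1%:M]_(j <- rcons s x) F j = (\big[mulmx/1%:M]_(j <- s) F j) *m F x.
Proof.
elim: s => [|y s IH] /=; first by rewrite big_cons !big_nil mulmx1 mul1mx.
by rewrite !big_cons IH mulmxA.
Qed.

Lemma bigmx_recr (R : realFieldType) (d : nat) (k : nat) (F : nat -> 'M[R]_d) :
  \big[mulmx/1%:M]_(j < k.+1) F j = (\big[mulmx/1%:M]_(j < k) F j) *m F k.
Proof.
by rewrite -!(big_mkord xpredT F) /index_iota !subn0 -addn1 iotaD add0n /= cats1 bigmx_rcons.
Qed.

Theorem mainTheorem4 (R : realFieldType) (d tau : nat) (L : mlaw R d)
    (w : seq 'I_d) (n : nat) :
  is_tau_mutation_law tau L ->
  (0 < size w)%N ->
  let m := size w in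
  let len j := (m%:R + j%:R * (tau%:R - 1)) : R in
  Esys L n (@fr1 R d) w = (len n)^-1 *: Esys L n (@ct1 R d) w /\
  (len n)^-1 *: Esys L n (@ct1 R d) w =
    (len n)^-1 *:
      ((\big[mulmx/1%:M]_(j < n)
          ((len j)^-1 *: (subst_mx L + (len j - 1)%:M))) *m ct1 R w).
Proof.
move=> [HL Hs] Hw m len.
have Htau : (0 < tau)%N.
  case: w Hw {m len} => [//|t w' _].
  have := proj2 (HL t); case E: (L t) => [|x s].
    by rewrite big_nil => /eqP; rewrite eq_sym oner_eq0.
  move=> _; have xin : x \in L t by rewrite E mem_head.
  by rewrite -(Hs _ _ xin); case: (proj1 (HL t) x xin).
have Hlen : forall (k : nat) (v : seq 'I_d), size v = (size w + k * (tau - 1))%N -> (size v)%:R = len k.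
  move=> k v ->; rewrite /len /m natrD natrM natrB //.
have Hpos : forall (k : nat) (v : seq 'I_d), size v = (size w + k * (tau - 1))%N -> (0 < size v)%N.
  by move=> k v ->; rewrite (leq_trans Hw) // leq_addr.
split.
  rewrite -mul_scalar_mx -(@Esys_lin _ _ _ _ _ _ (mulmx _)).
  apply: (@Esys_size _ _ tau) => // v Hv.
  by rewrite /fr1 (Hlen _ _ Hv); apply: esym; apply: mul_scalar_mx.
congr (_ *: _).
set A := fun j : nat => (len j)^-1 *: (subst_mx L + (len j - 1)%:M).
have comm : forall k, \big[mulmx/1%:M]_(j < k) A j *m subst_mx L =
                      subst_mx L *m \big[mulmx/1%:M]_(j < k) A j.
  elim=> [|k IH]; first by rewrite big_ord0 mul1mx mulmx1.
  rewrite bigmx_recr -mulmxA.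
  rewrite (_ : A k *m subst_mx L = subst_mx L *m A k); last first.
    by rewrite Amx_comm.
  by rewrite mulmxA [LHS]mulmxA IH.
clear Hw; elim: n => [|k IH].
  by rewrite big_ord0 mul1mx.
rewrite /= (bigmx_recr _ _ k A).
transitivity (Esys L k (fun v => A k *m ct1 R v) w).
  apply: (@Esys_size _ _ tau) => // v Hv.
  by rewrite mstep_ct1 // ?(Hlen _ _ Hv) // (Hpos _ _ Hv).
rewrite (@Esys_lin _ _ _ _ _ _ (mulmx (A k))) IH //.
apply: (etrans (mulmxA _ _ _)); congr (_ *m _).
exact: (Amx_comm _ _ _ _ (len k) (comm k)).
Qed.
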